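(* If $G$ is a simple graph with no $K_5$-minor, then $G$ is $(4,1)$-choosable.
   Context: A $(k,d)$-list assignment for a graph $G$ assigns to each vertex $v$ a list $L(v)$ of at least $k$ colors such that $|L(x)\cap L(y)|\le d$ whenever $x$ and $y$ are adjacent. $G$ is $(k,d)$-choosable if for every $(k,d)$-list assignment $L$ there is a proper vertex coloring $\varphi$ of $G$ with $\varphi(v)\in L(v)$ for all $v$. *)

(* Defs.v *)
From mathcomp Require Import all_boot.
From mathcomp Require Import finmap.
Set Implicit Arguments. Unset Strict Implicit. Unset Printing Implicit Defensive.

Definition simple_graph (T : finType) (e : rel T) : Prop :=
  symmetric e /\ irreflexive e.

Definition connected_in (T : finType) (e : rel T) (A : {set T}) : Prop :=
  forall x y, x \in A -> y \in A ->
    connect [rel u v | [&& u \in A, v \in A & e u v]] x y.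

Definition has_K_minor (n : nat) (T : finType) (e : rel T) : Prop :=
  exists B : 'I_n -> {set T},
    [/\ forall i, B i != set0,
        forall i, connected_in e (B i),
        forall i j, i != j -> [disjoint B i & B j]%bool &
        forall i j, i != j -> exists x y, [/\ x \in B i, y \in B j & e x y]].

Definition kd_list_assignment (T : finType) (e : rel T) (k d : nat)
    (L : T -> {fset nat}) : Prop :=
  (forall v, k <= #|` L v|%fset)%N /\
  (forall x y, e x y -> #|` (L x `&` L y)%fset|%fset <= d)%N.

Definition proper_L_coloring (T : finType) (e : rel T)
    (L : T -> {fset nat}) (phi : T -> nat) : Prop :=
  (forall v, phi v \in L v) /\ (forall x y, e x y -> phi x != phi y).

Definition kd_choosable (T : finType) (e : rel T) (k d : nat) : Prop :=
  forall L : T -> {fset nat}, kd_list_assignment e k d L ->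
    exists phi : T -> nat, proper_L_coloring e L phi.

(* Main.v *)
Require Import Defs.
From mathcomp Require Import all_boot.
From mathcomp Require Import finmap.
From mathcomp Require Import zify.
Set Implicit Arguments. Unset Strict Implicit. Unset Printing Implicit Defensive.

Lemma disjP (T:finType) (A B : {set T}) :
  reflect (forall x, x \in A -> x \in B -> False) [disjoint A & B].
Proof.
apply: (iffP pred0P) => H x.
  by move=> xA xB; have := H x; rewrite /= xA xB.
by apply/negbTE/negP => /andP [xA xB]; exact: (H x).
Qed.

Definition minor_in (k : nat) (T : finType) (e : rel T) (S : {set T}) : Prop :=
  exists B : 'I_k -> {set T},
    [/\ forall i, B i != set0, forall i, B i \subset S, forall i, connected_in e (B i),
        forall i j, i != j -> [disjoint B i & B j] &
        forall i j, i != j -> exists x y, [/\ x \in B i, y \in B j & e x y]].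

Lemma minor_in_has k (T : finType) (e : rel T) (S : {set T}) :
  minor_in k e S -> has_K_minor k e.
Proof. by case=> B [h1 h2 h3 h4 h5]; exists B; split. Qed.

Lemma minor_mono k (T : finType) (e e' : rel T) (S S' : {set T}) :
  (forall x y, x \in S' -> y \in S' -> e' x y -> e x y) -> S' \subset S ->
  minor_in k e' S' -> minor_in k e S.
Proof.
move=> He sS [B [h1 h2 h3 h4 h5]]; exists B; split => //.
- by move=> i; apply: subset_trans (h2 i) sS.
- move=> i x y xB yB; move: (h3 i x y xB yB); apply: connect_sub => a b /= /and3P [aB bB eab].
  apply: connect1; rewrite /= aB bB /=; apply: He eab.
    exact: (subsetP (h2 i)).
  exact: (subsetP (h2 i)).
- move=> i j ij; have [x [y [xB yB exy]]] := h5 i j ij; exists x, y; split => //.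
  by apply: He exy; [apply: (subsetP (h2 i)) | apply: (subsetP (h2 j))].
Qed.

Definition contract (T : finType) (e : rel T) (u v : T) : rel T :=
  fun a b => (a != b) && [|| e a b, (a == u) && e v b | (b == u) && e v a].

Lemma contract_sym (T : finType) (e : rel T) u v : symmetric e -> symmetric (contract e u v).
Proof.
move=> sy a b; rewrite /contract eq_sym sy; congr (_ && _).
by case: (e b a); case: (a == u); case: (b == u); case: (e v a); case: (e v b).
Qed.

Lemma contract_irr (T : finType) (e : rel T) u v : irreflexive (contract e u v).
Proof. rewrite /irreflexive /contract => a. by rewrite eqxx. Qed.

Definition crel (T:finType) (e : rel T) (A : {set T}) : rel T :=
  fun a b => [&& a \in A, b \in A & e a b].

Lemma connected_inE (T:finType) (e : rel T) (A : {set T}) :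
  connected_in e A <-> forall x y, x \in A -> y \in A -> connect (crel e A) x y.
Proof.
have E : connect [rel u v | [&& u \in A, v \in A & e u v]] =2 connect (crel e A).
  by apply: eq_connect => a b.
split=> H x y xA yA; move: (H x y xA yA); by rewrite E.
Qed.

Lemma crel1 (T:finType) (e : rel T) (A : {set T}) a b :
  a \in A -> b \in A -> e a b -> connect (crel e A) a b.
Proof. by move=> aA bA eab; apply: connect1; rewrite /crel aA bA. Qed.

Lemma minor_contract k (T : finType) (e : rel T) (S : {set T}) u v :
  symmetric e -> u \in S -> v \in S -> e u v ->
  minor_in k (contract e u v) (S :\ v) -> minor_in k e S.
Proof.
move=> sy uS vS euv [B [h1 h2 h3 h4 h5]].
have vB : forall i, v \notin B i.
  move=> i; apply/negP => /(subsetP (h2 i)); by rewrite !inE eqxx.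
have BS : forall i, B i \subset S.
  move=> i; apply/subsetP => x /(subsetP (h2 i)); by rewrite !inE => /andP [].
pose B' i := if u \in B i then v |: B i else B i.
have sub' : forall i, B i \subset B' i.
  by move=> i; rewrite /B'; case: (u \in B i) => //; apply: subsetUr.
have uB' : forall i, u \in B i -> v \in B' i.
  by move=> i ui; rewrite /B' ui !inE eqxx.
exists B'; split.
- move=> i; apply/set0Pn; have /set0Pn [x xB] := h1 i; exists x.
  exact: (subsetP (sub' i)).
- move=> i; rewrite /B'; case: (u \in B i) => //; rewrite subUset sub1set vS; exact: BS.
- move=> i; apply/connected_inE; have /connected_inE h3i := h3 i.
  rewrite /B'; case ui: (u \in B i); last first.
    move=> x y xB yB; move: (h3i x y xB yB); apply: connect_sub => a b /and3P [aB bB eab].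
    apply: crel1 => //.
    move: eab; rewrite /contract => /andP [_ /or3P [//|/andP [/eqP au _]|/andP [/eqP bu _]]].
      by rewrite -au aB in ui.
    by rewrite -bu bB in ui.
  have inB : forall x, x \in B i -> x \in v |: B i by move=> x xB; rewrite !inE xB orbT.
  have vv : v \in v |: B i by rewrite !inE eqxx.
  have ruv : connect (crel e (v |: B i)) u v by apply: crel1 => //; apply: inB.
  have rvu' : connect (crel e (v |: B i)) v u by apply: crel1 => //; [apply: inB | rewrite sy].
  have cB : forall x y, x \in B i -> y \in B i -> connect (crel e (v |: B i)) x y.
    move=> x y xB yB; move: (h3i x y xB yB); apply: connect_sub => a b /and3P [aB bB eab].
    move: eab; rewrite /contract => /andP [_ /or3P [eab|/andP [/eqP au evb]|/andP [/eqP bu eva]]].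
    + by apply: crel1 => //; apply: inB.
    + subst a; apply: (connect_trans ruv); by apply: crel1 => //; apply: inB.
    + subst b; apply: (connect_trans _ rvu'); by apply: crel1 => //; [apply: inB | rewrite sy].
  move=> x y; rewrite !inE => /orP [/eqP ->|xB] /orP [/eqP ->|yB].
  + exact: connect0.
  + exact: (connect_trans rvu' (cB _ _ ui yB)).
  + exact: (connect_trans (cB _ _ xB ui) ruv).
  + exact: cB.
- move=> i j ij; apply/disjP => x; rewrite /B'.
  case ui: (u \in B i); case uj: (u \in B j); rewrite ?inE.
  + by move: (h4 i j ij) => /disjP /(_ u ui uj).
  + move=> /orP [/eqP ->|xi] xj; first by move: xj; rewrite (negbTE (vB j)).
    by move: (h4 i j ij) => /disjP /(_ x xi xj).
  + move=> xi /orP [/eqP xv|xj]; first by move: xi; rewrite xv (negbTE (vB i)).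
    by move: (h4 i j ij) => /disjP /(_ x xi xj).
  + by move=> xi xj; move: (h4 i j ij) => /disjP /(_ x xi xj).
- move=> i j ij; have [x [y [xB yB exy]]] := h5 i j ij.
  move: exy; rewrite /contract => /andP [_ /or3P [exy|/andP [/eqP xu evy]|/andP [/eqP yu evx]]].
  + exists x, y; split => //; exact: (subsetP (sub' _)).
  + subst x; exists v, y; split => //; [exact: uB' | exact: (subsetP (sub' _))].
  + subst y; exists x, v; split => //; [exact: (subsetP (sub' _)) | exact: uB' | by rewrite sy].
Qed.

Lemma minor_apex j (T : finType) (e : rel T) (S N : {set T}) v :
  symmetric e -> v \in S -> N \subset S -> v \notin N -> (forall x, x \in N -> e v x) ->
  minor_in j e N -> minor_in j.+1 e S.
Proof.
move=> sy vS NS vN evN [B [h1 h2 h3 h4 h5]].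
pose B' (i : 'I_j.+1) := if unlift ord_max i is Some i' then B i' else [set v].
have BN : forall i x, x \in B i -> x \in N by move=> i x /(subsetP (h2 i)).
exists B'; split.
- move=> i; rewrite /B'; case: unliftP => [i'|] _ //; apply/set0Pn; exists v; by rewrite inE.
- move=> i; rewrite /B'; case: unliftP => [i'|] _; last by rewrite sub1set.
  exact: subset_trans (h2 i') NS.
- move=> i; rewrite /B'; case: unliftP => [i'|] _ //.
  move=> x y; rewrite !inE => /eqP -> /eqP ->; exact: connect0.
- move=> i k; rewrite /B'; case: unliftP => [i'|] -> ; case: unliftP => [k'|] -> ik.
  + apply: h4; apply: contraNneq ik => ->; by [].
  + apply/disjP => x /BN xN; rewrite inE => /eqP xv; by rewrite -xv xN in vN.
  + apply/disjP => x; rewrite inE => /eqP -> /BN xN; by rewrite xN in vN.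
  + by rewrite eqxx in ik.
- move=> i k; rewrite /B'; case: unliftP => [i'|] -> ; case: unliftP => [k'|] -> ik.
  + apply: h5; apply: contraNneq ik => ->; by [].
  + have /set0Pn [x xB] := h1 i'; exists x, v; split => //; first by rewrite inE.
    by rewrite sy; apply: evN; apply: BN xB.
  + have /set0Pn [x xB] := h1 k'; exists v, x; split => //; first by rewrite inE.
    by apply: evN; apply: BN xB.
  + by rewrite eqxx in ik.
Qed.

Lemma minor_one (T : finType) (e : rel T) (S : {set T}) x : x \in S -> minor_in 1 e S.
Proof.
move=> xS; exists (fun _ => [set x]); split.
- by move=> i; apply/set0Pn; exists x; rewrite inE.
- by move=> i; rewrite sub1set.
- by move=> i a b; rewrite !inE => /eqP -> /eqP ->; exact: connect0.
- by move=> i k; rewrite !ord1 eqxx.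
- by move=> i k; rewrite !ord1 eqxx.
Qed.
Definition nb (T:finType) (e : rel T) (S : {set T}) (x : T) : {set T} := [set y in S | e x y].
Definition D (T:finType) (e : rel T) (S : {set T}) := \sum_(x in S) #|nb e S x|.
Definition P (T:finType) (e : rel T) (S : {set T}) : {set T * T} :=
  [set p | [&& p.1 \in S, p.2 \in S & e p.1 p.2]].

Lemma D_P (T:finType) (e : rel T) (S : {set T}) : D e S = #|P e S|.
Proof.
rewrite /P -sum1dep_card big_mkcond /=.
rewrite -(pair_big xpredT xpredT (fun a b => if [&& a \in S, b \in S & e a b] then 1 else 0)) /=.
rewrite /D big_mkcond /=; apply: eq_bigr => a _.
case: (a \in S) => /=; last by rewrite big1.
rewrite -sum1_card big_mkcond /=; apply: eq_bigr => b _; by rewrite !inE.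
Qed.

Lemma D_le (T:finType) (e : rel T) (S : {set T}) : irreflexive e -> D e S <= #|S| * (#|S| - 1).
Proof.
move=> ir; rewrite /D -sum_nat_const; apply: leq_sum => x xS.
rewrite (cardsD1 x S) xS add1n subSS subn0.
apply: subset_leq_card; apply/subsetP => y; rewrite !inE.
case/andP => yS exy; rewrite yS andbT; apply/eqP => yx; by rewrite yx ir in exy.
Qed.

Lemma D_min (T:finType) (e : rel T) (S : {set T}) m :
  (forall x, x \in S -> m <= #|nb e S x|) -> #|S| * m <= D e S.
Proof. move=> H; rewrite /D -sum_nat_const; exact: leq_sum. Qed.

Lemma D_eq (T:finType) (e e' : rel T) (S : {set T}) :
  (forall x y, x \in S -> y \in S -> e x y = e' x y) -> D e S = D e' S.
Proof.
move=> H; apply: eq_bigr => x xS; apply: eq_card => y; rewrite !inE.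
case yS: (y \in S) => //=; exact: H.
Qed.
Lemma sum_bool_card (T : finType) (A : {set T}) (P : pred T) :
  \sum_(i in A) (P i : nat) = #|[set i in A | P i]|.
Proof.
rewrite -sum1_card big_mkcond [RHS]big_mkcond /=.
by apply: eq_bigr => i _; rewrite !inE; case: (i \in A); case: (P i).
Qed.

Lemma D_del (T:finType) (e : rel T) (S : {set T}) v : symmetric e -> irreflexive e -> v \in S ->
  D e S = D e (S :\ v) + 2 * #|nb e S v|.
Proof.
move=> sy ir vS.
rewrite /D (bigD1 v) //=.
have -> : \sum_(i in S | i != v) #|nb e S i| = \sum_(i in S :\ v) (#|nb e (S:\v) i| + (e i v)).
  apply: eq_big => [i|i /andP[iS iv]]; first by rewrite !inE andbC.
  rewrite (cardsD1 v) addnC; congr (_ + _).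
    by apply: eq_card => y; rewrite !inE; case: (y == v); rewrite ?andbF //= andbA.
  by rewrite !inE vS.
rewrite big_split /= sum_bool_card.
have -> : [set i in S :\ v | e i v] = nb e S v.
  apply/setP => y; rewrite !inE sy; case: (y =P v) => [->|]; first by rewrite ir !andbF.
  by [].
lia.
Qed.

Lemma D_even (T:finType) (e : rel T) (S : {set T}) : symmetric e -> irreflexive e ->
  exists q, D e S = 2 * q.
Proof.
move=> sy ir; move: {2}#|S| (erefl #|S|) => n; elim: n S => [|n IH] S hS.
  exists 0; move/eqP: hS; rewrite cards_eq0 => /eqP ->; by rewrite /D big_set0.
have: 0 < #|S| by rewrite hS.
rewrite card_gt0 => /set0Pn [v vS].
have [q hq] : exists q, D e (S :\ v) = 2 * q.
  apply: IH; move: hS; rewrite (cardsD1 v) vS; lia.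
exists (q + #|nb e S v|); rewrite (D_del sy ir vS) hq; lia.
Qed.

Lemma D_contract (T:finType) (e : rel T) (S : {set T}) u v :
  symmetric e -> irreflexive e -> u \in S -> v \in S -> e u v ->
  D e S <= D (contract e u v) (S :\ v) + 2 + 2 * #|nb e (nb e S v) u|.
Proof.
move=> sy ir uS vS euv.
have uv : u != v by apply/eqP => uv; rewrite uv ir in euv.
have uS' : u \in S :\ v by rewrite !inE uv.
rewrite (D_del sy ir vS) (D_del sy ir uS') (D_del (contract_sym u v sy) (contract_irr e u v) uS').
rewrite (D_eq (e' := contract e u v)); last first.
  move=> x y; rewrite !inE => /andP [xu /andP [xv xS]] /andP [yu /andP [yv yS]].
  rewrite /contract (negbTE xu) (negbTE yu) /= orbF.
  by case: (x =P y) => [->|] /=; rewrite ?ir.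
set A := nb e (S :\ v) u.
set B := nb e S v :\ u.
have sAB : A :|: B \subset nb (contract e u v) (S :\ v) u.
  apply/subsetP => y; rewrite !inE /contract.
  case/orP => [/andP [/andP [yv yS] euy]|/and3P [yu yS evy]].
    rewrite yv yS euy /= andbT; apply/eqP => uy; by rewrite uy ir in euy.
  have yv : y != v by apply/eqP => yv; rewrite yv ir in evy.
  by rewrite yv yS eq_sym yu eqxx evy /= orbT.
have cAB := cardsUI A B.
have cB : #|nb e S v| = 1 + #|B|.
  by rewrite /B (cardsD1 u (nb e S v)) !inE uS sy euv.
have cI : #|A :&: B| <= #|nb e (nb e S v) u|.
  apply: subset_leq_card; apply/subsetP => y; rewrite !inE.
  by case/and4P => /andP [/andP [_ yS] euy] _ _ evy; rewrite yS evy euy.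
have := subset_leq_card sAB.
lia.
Qed.

Definition Claim k (T : finType) := forall (e : rel T) (S : {set T}),
  symmetric e -> irreflexive e -> ~ minor_in k e S -> k - 2 <= #|S| ->
  D e S + (k - 1) * (k - 2) <= 2 * (k - 2) * #|S|.

Lemma claim2 (T : finType) : Claim 2 T.
Proof.
move=> e S sy ir nm _; rewrite muln0 mul0n addn0 leqn0; apply/eqP.
rewrite /D big1 // => x xS.
case: (set_0Vmem (nb e S x)) => [->|[y]]; first by rewrite cards0.
rewrite inE => /andP [yS exy]; exfalso; apply: nm.
apply: (minor_apex (N := [set y]) (v := x)) (minor_one e (set11 y)) => //; first by rewrite sub1set.
- by rewrite inE; apply/eqP => xy; rewrite xy ir in exy.
- by move=> z; rewrite inE => /eqP ->.
Qed.

Lemma step k (T : finType) : 3 <= k <= 5 -> Claim k.-1 T -> Claim k T.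
Proof.
move=> hk IHk.
have kk : [|| k == 3, k == 4 | k == 5].
  by clear IHk; case/andP: hk; case: k => [|[|[|[|[|[|k]]]]]].
suff H : forall n (e : rel T) (S : {set T}), #|S| = n -> symmetric e -> irreflexive e ->
   ~ minor_in k e S -> k - 2 <= #|S| -> D e S + (k - 1) * (k - 2) <= 2 * (k - 2) * #|S|.
  by move=> e S; apply: H.
elim/ltn_ind => n IH e S hn sy ir nm hS.
rewrite leqNgt; apply/negP => hx.
have [q hq] := D_even S sy ir.
have hle := D_le S ir.
rewrite hn in hle hx hS.
have hn1 : k - 1 <= n.
  rewrite leqNgt; apply/negP => h.
  have hS2 : n = k - 2 by lia.
  rewrite hS2 in hle hx; move: hle hx.
  by case/or3P: kk => /eqP Hk; subst k; lia.
have [y [hy1 hy]] : exists y, 1 <= y /\ D e S + (k-1)*(k-2) = 2*(k-2)*n + 2*y.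
  exists (q + (k-1)*(k-2) %/ 2 - (k-2)*n); move: hx; rewrite hq.
  by case/or3P: kk => /eqP Hk; subst k; lia.
have [v0 v0S] : exists v0, v0 \in S by apply/set0Pn; rewrite -card_gt0 hn; lia.
case: (arg_minnP (fun w => #|nb e S w|) v0S) => v vS0 vmin.
have vS : v \in S := vS0.
set N := nb e S v.
have IHS : forall e', symmetric e' -> irreflexive e' -> ~ minor_in k e' (S :\ v) ->
    D e' (S :\ v) + (k-1)*(k-2) <= 2*(k-2)*(n-1).
  move=> e' sy' ir' nm'.
  have cS : #|S :\ v| = n - 1 by have := cardsD1 v S; rewrite vS; lia.
  rewrite -cS; apply: (IH (n-1)) => //; lia.
have hdel := IHS e sy ir (fun h => nm (minor_mono (e':=e) (S':=S:\v) (fun x y _ _ h => h) (subsetDl S [set v]) h)).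
have hD := D_del sy ir vS.
have ht : forall u, u \in N -> y + k - 3 <= #|nb e N u|.
  move=> u; rewrite inE => /andP [uS evu].
  have euv : e u v by rewrite sy.
  have := D_contract sy ir uS vS euv.
  have := IHS (contract e u v) (contract_sym u v sy) (contract_irr e u v)
     (fun h => nm (minor_contract sy uS vS euv h)).
  move: hy hn1; rewrite -/N.
  by case/or3P: kk => /eqP Hk; subst k; lia.
have hmin : n * #|N| <= D e S by rewrite -hn; apply: D_min => w wS; apply: vmin.
have hN : ~ minor_in k.-1 e N.
  move=> h; apply: nm; have := minor_apex (S := S) (v := v) sy vS _ _ _ h.
  rewrite prednK; last by lia.
  apply.
  - apply/subsetP => z; rewrite inE; by case/andP.
  - by rewrite inE ir andbF.
  - by move=> z; rewrite inE => /andP [].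
have hm : 2 * #|N| >= 2 * y + 2 * (k - 2).
  move: hdel hD hy hn1; rewrite -/N.
  by case/or3P: kk => /eqP Hk; subst k; lia.
have hm' : k.-1 - 2 <= #|N| by lia.
have hcl := IHk e N sy ir hN hm'.
have hDN : #|N| * (y + k - 3) <= D e N by apply: D_min.
move: hcl hDN hm hmin hy hy1 hn1.
case/or3P: kk => /eqP Hk; subst k => /=; nia.
Qed.

Lemma sum_mod (T : finType) (f : T -> nat) (A B : {set T}) :
  \sum_(w in A :|: B) f w + \sum_(w in A :&: B) f w = \sum_(w in A) f w + \sum_(w in B) f w.
Proof.
rewrite (big_setID (A := A :|: B) B) /= (big_setID (A := A) B) /=.
have -> : (A :|: B) :&: B = B by apply/setP => z; rewrite !inE; case: (z \in A); case: (z \in B).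
have -> : (A :|: B) :\: B = A :\: B by apply/setP => z; rewrite !inE; case: (z \in A); case: (z \in B).
lia.
Qed.

Lemma P_even (T:finType) (e : rel T) (W : {set T}) : symmetric e -> irreflexive e ->
  exists q, #|P e W| = 2 * q.
Proof. by move=> sy ir; rewrite -D_P; apply: D_even. Qed.

Lemma P_super (T:finType) (e : rel T) (A B : {set T}) x y :
  x \in A -> x \notin B -> y \in B -> y \notin A -> e x y -> symmetric e ->
  #|P e A| + #|P e B| + 2 <= #|P e (A :|: B)| + #|P e (A :&: B)|.
Proof.
move=> xA xB yB yA exy sy.
have -> : P e (A :&: B) = P e A :&: P e B.
  apply/setP => p; rewrite !inE; case: (p.1 \in A); case: (p.1 \in B); case: (p.2 \in A);
  case: (p.2 \in B); by case: (e p.1 p.2).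
have cU := cardsUI (P e A) (P e B).
set Q := [set (x, y); (y, x)].
have xy : x != y by apply/eqP => xy; rewrite xy yB in xB.
have cQ : #|Q| = 2 by rewrite cards2; case: eqP => // [[]] /eqP; rewrite (negbTE xy).
have dQ : [disjoint (P e A :|: P e B) & Q].
  apply/disjP => p; rewrite !inE => H /orP [] /eqP pe; subst p; move: H => /=;
  by rewrite ?(negbTE xB) ?(negbTE yA) ?andbF.
have sQ : (P e A :|: P e B) :|: Q \subset P e (A :|: B).
  apply/subsetP => p; rewrite !inE => /orP [/orP [] /and3P [h1 h2 h3]|/orP [] /eqP -> /=].
  - by rewrite h1 h2 h3.
  - by rewrite h1 h2 h3 !orbT.
  - by rewrite xA yB exy orbT.
  - by rewrite xA yB sy exy orbT.
have := subset_leq_card sQ; rewrite cardsU (disjoint_setI0 dQ) cards0 subn0 cQ.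
lia.
Qed.

Definition orientation (T:finType) (e : rel T) (f : T -> nat) (o : rel T) :=
  [/\ forall a b, o a b -> e a b, forall a b, e a b -> o a b || o b a &
      forall v, #|[set u | o u v]| <= f v].

Definition rmE (T:finType) (e : rel T) (a b : T) : rel T :=
  fun p q => e p q && ~~ (((p == a) && (q == b)) || ((p == b) && (q == a))).

Lemma P_sub (T:finType) (e e' : rel T) W : (forall p q, e' p q -> e p q) -> P e' W \subset P e W.
Proof.
move=> H; apply/subsetP => p; rewrite !inE => /and3P [h1 h2 h3]; by rewrite h1 h2 H.
Qed.

Lemma sum_minus (T:finType) (f : T -> nat) a (W : {set T}) : 0 < f a ->
  \sum_(w in W) f w = \sum_(w in W) (f w - (w == a)) + (a \in W).
Proof.
move=> fa.
rewrite (eq_bigr (fun w => (f w - (w == a)) + (w == a))); last first.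
  by move=> w _; case: (w =P a) => [->|]; lia.
rewrite big_split /=; congr (_ + _).
case aW: (a \in W).
  rewrite (bigD1 a) //= eqxx big1 // => w /andP [_ /negbTE ->]; by [].
by rewrite big1 // => w wW; case: (w =P a) => // wa; rewrite -wa wW in aW.
Qed.

Lemma orient_into (T:finType) (e : rel T) (f : T -> nat) a b :
  (forall (e' : rel T) (f' : T -> nat), #|P e' setT| < #|P e setT| -> symmetric e' -> irreflexive e' ->
     (forall W : {set T}, #|P e' W| <= 2 * \sum_(w in W) f' w) -> exists o, orientation e' f' o) ->
  symmetric e -> irreflexive e -> e a b ->
  (forall W : {set T}, #|P e W| <= 2 * \sum_(w in W) f w) ->
  (forall W : {set T}, a \in W -> b \notin W -> #|P e W| != 2 * \sum_(w in W) f w) ->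
  exists o, orientation e f o.
Proof.
move=> IH sy ir eab hW nt.
have ab : a != b by apply/eqP => ab; rewrite ab ir in eab.
have fa : 0 < f a.
  have := nt [set a]; rewrite !inE eq_sym ab big_set1 => /(_ (eqxx a) isT).
  have -> : P e [set a] = set0.
    apply/setP => p; rewrite !inE; apply/negbTE; apply/negP => /and3P [/eqP h1 /eqP h2].
    by rewrite h1 h2 ir.
  rewrite cards0; lia.
pose e' := rmE e a b.
pose f' := fun w => f w - (w == a).
have e'e : forall p q, e' p q -> e p q by move=> p q /andP [].
have Pab : forall W : {set T}, a \in W -> b \in W -> #|P e' W| + 2 <= #|P e W|.
  move=> W aW bW.
  have sQ : P e' W :|: [set (a, b); (b, a)] \subset P e W.
    apply/subsetP => p; rewrite !inE => /orP [/and3P [h1 h2 /andP [h3 _]]|/orP [] /eqP -> /=].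
    - by rewrite h1 h2 h3.
    - by rewrite aW bW eab.
    - by rewrite aW bW sy eab.
  have dQ : [disjoint P e' W & [set (a, b); (b, a)]].
    apply/disjP => p; rewrite !inE => H /orP [] /eqP pe; subst p; move: H => /=;
    by rewrite /e' /rmE !eqxx /= ?orbT ?andbF.
  have cQ : #|[set (a, b); (b, a)]| = 2.
    by rewrite cards2; case: eqP => // [[]] /eqP; rewrite (negbTE ab).
  have := subset_leq_card sQ; rewrite cardsU (disjoint_setI0 dQ) cards0 subn0 cQ; lia.
have [o' [o1 o2 o3]] : exists o, orientation e' f' o.
  apply: IH.
  - apply: proper_card; apply/properP; split; first exact: P_sub.
    exists (a, b); first by rewrite !inE eab.
    by rewrite !inE /= /e' /rmE !eqxx /= andbF.
  - move=> p q; rewrite /e' /rmE sy; congr (_ && _).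
    by case: (p == a); case: (p == b); case: (q == a); case: (q == b).
  - by move=> p; rewrite /e' /rmE ir.
  - move=> W; have hs := sum_minus W fa; rewrite -/f' in hs.
    have := hW W; have := subset_leq_card (P_sub W e'e).
    rewrite /f'; case aW: (a \in W); last by rewrite hs aW; lia.
    case bW: (b \in W); first by have := Pab W aW bW; rewrite hs aW; lia.
    have := nt W aW (negbT bW); have [q hq] := P_even W sy ir.
    rewrite hs aW hq; lia.
exists (fun p q => o' p q || ((p == b) && (q == a))); split.
- move=> p q /orP [/o1 /e'e //|/andP [/eqP -> /eqP ->]]; by rewrite sy.
- move=> p q epq.
  case E: (((p == a) && (q == b)) || ((p == b) && (q == a))).
    case/orP: E => /andP [/eqP -> /eqP ->]; by rewrite !eqxx ?orbT.
  have : e' p q by rewrite /e' /rmE epq E.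
  by move/o2 => /orP [->|->]; rewrite ?orbT.
- move=> w; case: (w =P a) => [->|wa].
  have sU : [set u | o' u a || (u == b) && (a == a)] \subset b |: [set u | o' u a].
    apply/subsetP => u; rewrite !inE eqxx andbT; by case/orP => ->; rewrite ?orbT.
  have := subset_leq_card sU; have := cardsU1 b [set u | o' u a].
  have := o3 a; rewrite /f' eqxx /=.
  have := leq_b1 (b \notin [set u | o' u a]); lia.
  have -> : [set u | o' u w || (u == b) && false] = [set u | o' u w].
    by apply/setP => u; rewrite !inE andbF orbF.
  by have := o3 w; rewrite /f'; move/eqP/negbTE: wa => ->; rewrite subn0.
Qed.

Lemma orient (T:finType) : forall n (e : rel T) (f : T -> nat), #|P e setT| = n ->
  symmetric e -> irreflexive e -> (forall W : {set T}, #|P e W| <= 2 * \sum_(w in W) f w) ->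
  exists o, orientation e f o.
Proof.
elim/ltn_ind => n IH e f hn sy ir hW.
have IH' : forall (e' : rel T) (f' : T -> nat), #|P e' setT| < #|P e setT| -> symmetric e' -> irreflexive e' ->
     (forall W : {set T}, #|P e' W| <= 2 * \sum_(w in W) f' w) -> exists o, orientation e' f' o.
  move=> e' f' h; rewrite hn in h; exact: (IH _ h e' f' erefl).
case: (set_0Vmem (P e setT)) => [P0|[[x y] pxy]].
  exists e; split => //; first by move=> a b ->.
  move=> v; have -> : [set u | e u v] = set0; last by rewrite cards0.
  apply/setP => u; rewrite !inE; apply/negbTE/negP => euv.
  have : (u, v) \in P e setT by rewrite !inE.
  by rewrite P0 inE.
have exy : e x y by move: pxy; rewrite !inE.
case: (boolP [exists W : {set T}, [&& x \in W, y \notin W & #|P e W| == 2 * \sum_(w in W) f w]]) =>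
   [/existsP [W1 /and3P [x1 y1 t1]]|nx]; last first.
  apply: (orient_into IH' sy ir exy hW) => W xW yW; apply/negP => t.
  by move/negP: nx; apply; apply/existsP; exists W; rewrite xW yW t.
case: (boolP [exists W : {set T}, [&& y \in W, x \notin W & #|P e W| == 2 * \sum_(w in W) f w]]) =>
   [/existsP [W2 /and3P [y2 x2 t2]]|ny]; last first.
  have eyx : e y x by rewrite sy.
  apply: (orient_into IH' sy ir eyx hW) => W xW yW; apply/negP => t.
  by move/negP: ny; apply; apply/existsP; exists W; rewrite xW yW t.
exfalso.
have := P_super x1 x2 y2 y1 exy sy.
have := hW (W1 :|: W2); have := hW (W1 :&: W2); have := sum_mod f W1 W2.
move/eqP: t1; move/eqP: t2; lia.
Qed.

Lemma claim5 (T : finType) : Claim 5 T.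
Proof.
apply: (@step 5) => //; apply: (@step 4) => //; apply: (@step 3) => //; exact: claim2.
Qed.

Lemma sparse (T : finType) (e : rel T) : symmetric e -> irreflexive e -> ~ has_K_minor 5 e ->
  forall W : {set T}, #|P e W| <= 2 * \sum_(w in W) 3.
Proof.
move=> sy ir nK W; rewrite sum_nat_const -D_P.
case: (leqP 3 #|W|) => hW.
  have := claim5 sy ir (fun h => nK (minor_in_has h)) hW; lia.
have := D_le W ir; nia.
Qed.

Lemma uniq_common (A B : {fset nat}) c c' : (#|` (A `&` B)%fset| <= 1)%N ->
  c \in A -> c \in B -> c' \in A -> c' \in B -> c = c'.
Proof.
move=> h cA cB cA' cB'; apply/eqP; apply: contraTT h => ne; rewrite -ltnNge.
have : ([fset c; c'] `<=` A `&` B)%fset.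
  apply/fsubsetP => z; rewrite !inE => /orP [] /eqP ->; by rewrite ?cA ?cB ?cA' ?cB'.
move/fsubset_leq_card; rewrite cardfs2 ne; by [].
Qed.

Theorem corollary2 (T : finType) (e : rel T) :
  simple_graph e -> ~ has_K_minor 5 e -> kd_choosable e 4 1.
Proof.
move=> [sy ir] nK L [hL hI].
have [o [o1 o2 o3]] := orient erefl sy ir (sparse sy ir nK).
pose s v := [seq odflt 0 (ohead [seq c <- (L v : seq nat) | c \in L u]) | u <- enum [set u | o u v]].
pose phi v := head 0 [seq c <- (L v : seq nat) | c \notin s v].
have phiP : forall v, phi v \in L v /\ phi v \notin s v.
  move=> v.
  have : phi v \in [seq c <- (L v : seq nat) | c \notin s v].
    rewrite /phi; case E: [seq c <- (L v : seq nat) | c \notin s v] => [|a l]; last exact: mem_head.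
    exfalso.
    have sub : {subset (L v : seq nat) <= s v}.
      move=> c cL; apply/negPn/negP => cs.
      have : c \in [seq c <- (L v : seq nat) | c \notin s v] by rewrite mem_filter cs.
      by rewrite E.
    have := uniq_leq_size (fset_uniq (L v)) sub.
    rewrite /s size_map -cardE.
    have := o3 v; have := hL v; rewrite /=; lia.
  by rewrite mem_filter => /andP [].
exists phi; split; first by move=> v; case: (phiP v).
suff H : forall x y, e x y -> o x y -> phi x != phi y.
  move=> x y exy; case/orP: (o2 x y exy) => oxy; first exact: H.
  by rewrite eq_sym; apply: H => //; rewrite sy.
move=> x y exy oxy; apply/eqP => exy'.
have [hx _] := phiP x; have [hy ny] := phiP y.
apply/negP: ny.
have cx : phi y \in L x by rewrite -exy'.
case E: [seq c <- (L y : seq nat) | c \in L x] => [|h l].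
  have : phi y \in [seq c <- (L y : seq nat) | c \in L x] by rewrite mem_filter cx hy.
  by rewrite E.
have : h \in [seq c <- (L y : seq nat) | c \in L x] by rewrite E mem_head.
rewrite mem_filter => /andP [hLx hLy].
have hh : h = phi y by apply: (uniq_common (hI x y exy)).
rewrite negbK /s; apply/mapP; exists x; first by rewrite mem_enum inE.
by rewrite E /= hh.
Qed.
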